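(* For all $x\in W_{\mathbf{Q}}(\mathbf{Q}(t))$, $\rho_s(x)\ge s(x)$.
   Context: $W(\mathbf{Q}(t))$ is the Witt group of nonsingular hermitian forms over $\mathbf{Q}(t)$ with involution induced by $t\mapsto t^{-1}$, $\rho(w)$ the minimal dimension of a representing hermitian matrix, and $\sigma_w(t)$ ($t\in[0,\tfrac12)$) its averaged signature function: for a representative $A$, with $\sigma'_A(t)$ the signature of $A(e^{2\pi it})$, $\sigma_w(t)=\tfrac12(\lim_{\tau\downarrow t}\sigma'_A(\tau)+\lim_{\tau\uparrow t}\sigma'_A(\tau))$ for $t>0$ and $\sigma_w(0)=\lim_{\tau\downarrow0}\sigma'_A(\tau)$. Let $W_{\mathbf{Q}}(\mathbf{Q}(t))=W(\mathbf{Q}(t))\otimes\mathbf{Q}$. Every element has the form $w\otimes\frac1n$ with $w\in W(\mathbf{Q}(t))$, $n\ge1$; define $\rho_s(w\otimes\frac1n)=\frac{1}{4n}\rho(4w)$ and $s(w\otimes\frac1n)=\frac1n\max_t|\sigma_w(t)|$ (these are well defined). *)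

(* Defs.v *)
From HB Require Import structures.
From mathcomp Require Import all_boot all_order all_algebra.
From mathcomp Require Import complex.
From mathcomp Require Import all_classical all_reals all_analysis.
From mathcomp Require Import Rstruct Rstruct_topology.
From Stdlib Require Import Rdefinitions.
Local Notation R := Rdefinitions.R.

Set Implicit Arguments.
Unset Strict Implicit.
Unset Printing Implicit Defensive.

Import Order.TTheory GRing.Theory Num.Theory.
Local Open Scope ring_scope.
Local Open Scope classical_set_scope.

Definition Qt : fieldType := {fraction {poly rat}}.

Definition tQ : Qt := tofrac ('X : {poly rat}).

Definition fnum (f : Qt) : {poly rat} := ((repr f : {ratio {poly rat}}) : {poly rat} * {poly rat}).1.
Definition fden (f : Qt) : {poly rat} := ((repr f : {ratio {poly rat}}) : {poly rat} * {poly rat}).2.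

Definition polyinvt (p : {poly rat}) : Qt := (map_poly (fun c : rat => tofrac (c%:P : {poly rat})) p : {poly Qt}).[tQ^-1].

Definition qt_bar (f : Qt) : Qt := polyinvt (fnum f) / polyinvt (fden f).

Definition adjQ m n (A : 'M[Qt]_(m, n)) : 'M[Qt]_(n, m) := (map_mx qt_bar A)^T.

Definition hermitian n (A : 'M[Qt]_n) : Prop := adjQ A = A.

(* nonsingular hermitian matrices: the representatives of W(Q(t)) *)
Definition nsherm n (A : 'M[Qt]_n) : Prop := hermitian A /\ A \in unitmx.

Definition dsum m n (A : 'M[Qt]_m) (B : 'M[Qt]_n) : 'M[Qt]_(m + n) :=
  block_mx A 0 0 B.

(* metabolic form: it has a Lagrangian, i.e. a totally isotropic subspace
   (spanned by the rows of L) of half the dimension *)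
Definition metabolic n (M : 'M[Qt]_n) : Prop :=
  exists k (L : 'M[Qt]_(k, n)),
    (k + k)%N = n /\ \rank L = k /\ L *m M *m adjQ L = 0.

(* B and A represent the same element of the Witt group W(Q(t)) *)
Definition witt_equiv m n (B : 'M[Qt]_m) (A : 'M[Qt]_n) : Prop :=
  metabolic (dsum B (- A)).

Definition four m (A : 'M[Qt]_m) := dsum (dsum A A) (dsum A A).

Definition rho m (A : 'M[Qt]_m) : R :=
  inf [set (n%:R : R) | n in [set n : nat |
        exists B : 'M[Qt]_n, nsherm B /\ witt_equiv B A]].

Definition C := R[i].

Definition evalQ (f : Qt) (z : C) : C :=
  (map_poly ratr (fnum f)).[z] / (map_poly ratr (fden f)).[z].

Definition evalmx n (A : 'M[Qt]_n) (z : C) : 'M[C]_n := map_mx (evalQ ^~ z) A.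

Definition expi (tau : R) : C := Complex (cos (2 * pi * tau)) (sin (2 * pi * tau)).

Definition eigenvalues n (M : 'M[C]_n) : seq C :=
  sval (closed_field_poly_normal (char_poly M)).

Definition signature n (M : 'M[C]_n) : int :=
  (count (fun z => 0 < z) (eigenvalues M))%:Z
  - (count (fun z => z < 0) (eigenvalues M))%:Z.

Definition sigma' n (A : 'M[Qt]_n) (tau : R) : R :=
  (signature (evalmx A (expi tau)))%:~R.

Definition sigma n (A : 'M[Qt]_n) (t : R) : R :=
  if t == 0 then lim (sigma' A @ at_right t)
  else (lim (sigma' A @ at_right t) + lim (sigma' A @ at_left t)) / 2.

Definition maxsig n (A : 'M[Qt]_n) : R :=
  sup [set `|sigma A t| | t in `[0, 1/2[%classic].

(* rho_s and s on W_Q(Q(t)) = W(Q(t)) (x) Q, on the element w (x) 1/k, *)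
(* with w the Witt class of A                                          *)

Definition rho_s m (A : 'M[Qt]_m) (k : nat) : R := rho (four A) / (4 * k%:R).

Definition s_fun m (A : 'M[Qt]_m) (k : nat) : R := maxsig A / k%:R.

(* Main.v *)
Require Import Defs.
From HB Require Import structures.
From mathcomp Require Import all_boot all_order all_algebra complex.
From mathcomp Require Import all_classical all_reals all_analysis.
From mathcomp Require Import Rstruct Rstruct_topology.
From mathcomp Require Import ring lra zify.
Import Order.TTheory GRing.Theory Num.Theory.
Local Open Scope ring_scope.
Local Open Scope sesquilinear_scope.
Set Implicit Arguments.
Unset Strict Implicit.
Unset Printing Implicit Defensive.
Local Notation RR := Rdefinitions.R.


Definition poscnt n (d : 'rV[C]_n) := #|[set i | 0 < d 0 i]|.

Lemma iso_bound N k (U : 'M[C]_N) (d : 'rV[C]_N) (L : 'M[C]_(k, N)) :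
  U \is unitarymx -> L *m (U ^t* *m diag_mx d *m U) *m L ^t* = 0 ->
  row_free L -> (poscnt d + k <= N)%nat.
Proof.
move=> /unitarymxP UU LXL Lfree.
rewrite /poscnt; set A := [set i | 0 < d 0 i].
pose f := (@enum_val _ (mem A)).
pose P : 'M[C]_(#|A|, N) := \matrix_(j, l) U (f j) l.
have E1 : P *m U ^t* = \matrix_(j, i) ((f j == i)%:R).
  apply/matrixP => j i; rewrite !mxE.
  have := congr1 (fun M : 'M[C]_N => M (f j) i) UU; rewrite !mxE => <-.
  by apply: eq_bigr => l _; rewrite !mxE.
have PP : P *m P ^t* = 1%:M.
  apply/matrixP => j j'; rewrite !mxE.
  have := congr1 (fun M : 'M[C]_N => M (f j) (f j')) UU; rewrite !mxE (inj_eq enum_val_inj) => <-.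
  by apply: eq_bigr => l _; rewrite !mxE.
have rP : \rank P = #|A| by apply: mxrank_unitary; apply/unitarymxP.
have E2 : P *m (U ^t* *m diag_mx d *m U) *m P ^t* = diag_mx (\row_j d 0 (f j)).
  have -> : P *m (U ^t* *m diag_mx d *m U) *m P ^t* =
     (P *m U ^t*) *m diag_mx d *m (P *m U ^t*) ^t*.
    by rewrite trmx_mul map_mxM trmxCK !mulmxA.
  rewrite E1 mul_mx_diag; apply/matrixP => j j'; rewrite !mxE.
  rewrite (bigD1 (f j)) //= big1 ?addr0; last first.
    by move=> i /negbTE ne; rewrite !mxE eq_sym ne !mul0r.
  rewrite !mxE eqxx mul1r (inj_eq enum_val_inj) eq_sym.
  by case: (j == j'); rewrite /= ?conjC1 ?conjC0 ?mulr1 ?mulr0 ?mulr1n ?mulr0n.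
have cap0 : (P :&: L)%MS = 0.
  apply/eqP; rewrite -submx0; apply/row_subP => r.
  set v := row r _.
  have : (v <= P :&: L)%MS by exact: row_sub.
  rewrite sub_capmx => /andP[/submxP[a va] /submxP[b vb]].
  have h0 : v *m (U ^t* *m diag_mx d *m U) *m v ^t* = 0.
    have -> : v *m (U ^t* *m diag_mx d *m U) *m v ^t* =
      b *m (L *m (U ^t* *m diag_mx d *m U) *m L ^t*) *m b ^t*.
      by rewrite vb trmx_mul map_mxM !mulmxA.
    by rewrite LXL mulmx0 mul0mx.
  have h1 : v *m (U ^t* *m diag_mx d *m U) *m v ^t* = a *m diag_mx (\row_j d 0 (f j)) *m a ^t*.
    by rewrite va trmx_mul map_mxM -E2 !mulmxA.
  rewrite h1 in h0.
  have aeq : a = 0.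
    apply/rowP => j; rewrite mxE.
    have := congr1 (fun M : 'M[C]_1 => M 0 0) h0; rewrite !mxE => hs.
    have hge : forall i, true -> 0 <= (a *m diag_mx (\row_j0 d 0 (f j0))) 0 i * (a ^t*) i 0.
      move=> i _; rewrite mul_mx_diag !mxE mulrAC.
      apply: mulr_ge0; first exact: mul_conjC_ge0.
      have : f i \in A by apply: enum_valP.
      by rewrite inE => /ltW.
    have := psumr_eq0P hge hs (i:=j) isT.
    rewrite mul_mx_diag !mxE mulrAC => /eqP; rewrite mulf_eq0 mul_conjC_eq0 => /orP[/eqP //|].
    have : f j \in A by apply: enum_valP.
    by rewrite inE => /gt_eqF ->.
  by rewrite va aeq mul0mx sub0mx.
have := mxrank_sum_cap P L.
rewrite cap0 mxrank0 addn0 rP.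
move: Lfree; rewrite /row_free => /eqP ->.
move=> <-; exact: rank_leq_col.
Qed.


Lemma char_poly_sim n (U D : 'M[C]_n) : U \in unitmx ->
  char_poly (invmx U *m D *m U) = char_poly D.
Proof.
move=> Uu; rewrite /char_poly /char_poly_mx !map_mxM.
set U' := map_mx polyC U; set V' := map_mx polyC (invmx U).
have VU : V' *m U' = 1%:M by rewrite -map_mxM mulVmx // map_mx1.
transitivity (\det (V' *m ('X%:M - map_mx polyC D) *m U')).
  congr (\det _); rewrite mulmxBr mulmxBl; congr (_ - _).
  by rewrite scalar_mxC -mulmxA VU mulmx1.
rewrite !det_mulmx mulrC mulrA -det_mulmx.
have -> : U' *m V' = 1%:M by rewrite -map_mxM mulmxV // map_mx1.
by rewrite det1 mul1r.
Qed.

Lemma eig_perm n (X U : 'M[C]_n) (d : 'rV[C]_n) : U \in unitmx ->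
  X = invmx U *m diag_mx d *m U ->
  perm_eq (eigenvalues X) [seq d 0 i | i <- enum 'I_n].
Proof.
move=> Uu HX; rewrite /eigenvalues; case: closed_field_poly_normal => r /= Hr.
apply: prod_XsubC_eq.
rewrite (monicP (char_poly_monic X)) scale1r in Hr.
rewrite -Hr HX char_poly_sim // char_poly_trig ?diag_mx_is_trig //.
rewrite big_map big_enum /=; apply: eq_bigr => i _; by rewrite mxE eqxx mulr1n.
Qed.

Lemma poscntE n (d : 'rV[C]_n) : poscnt d = count (fun i => 0 < d 0 i) (enum 'I_n).
Proof.
rewrite /poscnt cardE enumT /enum_mem size_filter. apply: eq_count => i. first [by rewrite /= inE | by rewrite unfold_in inE | by rewrite -topredE /= inE | exact: (in_set _ i) | by rewrite -[mem _ _]/(i \in _) inE]. Qed.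

Lemma poscnt_row a b (d : 'rV[C]_a) (e : 'rV[C]_b) :
  poscnt (row_mx d e) = (poscnt d + poscnt e)%nat.
Proof.
rewrite !poscntE -!sum1_count !big_enum_cond /= big_split_ord /=.
congr (_ + _)%nat; apply: eq_bigl => i; by rewrite ?row_mxEl ?row_mxEr.
Qed.

Lemma count_eig n (X U : 'M[C]_n) (d : 'rV[C]_n) : U \in unitmx ->
  X = invmx U *m diag_mx d *m U ->
  count (fun z => 0 < z) (eigenvalues X) = poscnt d /\
  count (fun z => z < 0) (eigenvalues X) = poscnt (- d).
Proof.
move=> Uu HX; have P := eig_perm Uu HX.
rewrite !(permP P) !count_map !poscntE; rewrite enumT; split.
  by apply: eq_count.
by apply: eq_count => i; rewrite /= mxE oppr_gt0.
Qed.

Lemma opp_row a b (d : 'rV[C]_a) (e : 'rV[C]_b) : - row_mx d e = row_mx (- d) (- e).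
Proof. by rewrite opp_row_mx. Qed.


Lemma ct0 a b : (0 : 'M[C]_(a, b)) ^ Num.conj = 0.
Proof. by apply/matrixP => i j; rewrite !mxE conjC0. Qed.

Lemma herm_dec n (X : 'M[C]_n) : X = X ^t* ->
  exists (U : 'M[C]_n) (d : 'rV[C]_n), [/\ U \is unitarymx, X = U ^t* *m diag_mx d *m U & d \is a realmx].
Proof.
move=> HX.
have XH : X \is hermsymmx by apply/is_hermitianmxP; rewrite expr0 scale1r.
have := hermitian_normalmx XH => /orthomx_spectralP HXs.
exists (spectralmx X), (spectral_diag X); split.
- exact: spectral_unitarymx.
- by rewrite {1}HXs invmx_unitary // spectral_unitarymx.
- exact: hermitian_spectral_diag_real.
Qed.

Lemma blk_unitary a b (V : 'M[C]_a) (W : 'M[C]_b) : V \is unitarymx -> W \is unitarymx ->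
  block_mx V 0 0 W \is unitarymx.
Proof.
move=> /unitarymxP VV /unitarymxP WW; apply/unitarymxP.
rewrite tr_block_mx map_block_mx !trmx0 !ct0 mulmx_block.
by rewrite !mulmx0 !mul0mx !addr0 !add0r VV WW -scalar_mx_block.
Qed.

Lemma blk_dec a b (V : 'M[C]_a) (W : 'M[C]_b) d e :
  block_mx (V ^t* *m diag_mx d *m V) 0 0 (W ^t* *m diag_mx e *m W) =
  (block_mx V 0 0 W) ^t* *m diag_mx (row_mx d e) *m block_mx V 0 0 W.
Proof.
rewrite diag_mx_row tr_block_mx map_block_mx !trmx0 !ct0 !mulmx_block.
by rewrite !(mulmx0, mul0mx, addr0, add0r).
Qed.

Lemma neg_dec n (V : 'M[C]_n) d : - (V ^t* *m diag_mx d *m V) = V ^t* *m diag_mx (- d) *m V.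
Proof.
have -> : diag_mx (- d) = - diag_mx d by apply/matrixP => i j; rewrite !mxE mulNrn.
by rewrite mulmxN mulNmx.
Qed.

Lemma unit_dec n (U : 'M[C]_n) d : U \is unitarymx ->
  U ^t* *m diag_mx d *m U \in unitmx -> forall i, d 0 i != 0.
Proof.
move=> Uu Xu i.
have UU := unitarymxP Uu.
have Dd : diag_mx d = U *m (U ^t* *m diag_mx d *m U) *m U ^t*.
  by rewrite !mulmxA UU mul1mx -mulmxA UU mulmx1.
have Du : diag_mx d \in unitmx.
  rewrite Dd unitmx_mul unitmx_mul Xu unitarymx_unit //=.
  by rewrite -invmx_unitary // unitmx_inv unitarymx_unit.
move: Du; rewrite unitmxE det_diag unitfE => /prodf_neq0 /(_ i isT) //.
Qed.

Lemma poscnt_opp_sum n (d : 'rV[C]_n) : d \is a realmx -> (forall i, d 0 i != 0) ->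
  (poscnt d + poscnt (- d))%nat = n.
Proof.
move=> /mxOverP dr dn0; rewrite !poscntE -count_predUI.
rewrite (eq_count (a2 := predT)); last first.
  move=> i /=; rewrite mxE oppr_gt0.
  have := dn0 i; rewrite (real_neqr_lt (dr 0 i) (real0 _)).
  by case/orP => ->; rewrite ?orbT.
rewrite count_predT size_enum_ord (eq_count (a2 := pred0)) ?count_pred0 ?addn0 //.
move=> i /=; rewrite mxE oppr_gt0; apply/negP => /andP[h1 h2].
by have := lt_trans h2 h1; rewrite ltxx.
Qed.

Lemma la_main n m k (Bz : 'M[C]_n) (Az : 'M[C]_m)
  (Lz : 'M[C]_(k, n + (m + m + (m + m)))) :
  Bz = Bz ^t* -> Az = Az ^t* -> Az \in unitmx ->
  (k + k)%nat = (n + (m + m + (m + m)))%nat -> row_free Lz ->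
  Lz *m block_mx Bz 0 0 (- block_mx (block_mx Az 0 0 Az) 0 0 (block_mx Az 0 0 Az))
     *m Lz ^t* = 0 ->
  `|(signature Az)%:~R : Rdefinitions.R| * 4 <= n%:R.
Proof.
move=> HB HA Au hk Lf HL.
have [UB [dB [uB eB rB]]] := herm_dec HB.
have [UA [dA [uA eA rA]]] := herm_dec HA.
have Au' : UA ^t* *m diag_mx dA *m UA \in unitmx by rewrite -eA.
have dA0 := unit_dec uA Au'.
have pq := poscnt_opp_sum rA dA0.
have eA' : Az = invmx UA *m diag_mx dA *m UA by rewrite invmx_unitary.
have [cp cn] := count_eig (unitarymx_unit uA) eA'.
set U := block_mx UB 0 0 (block_mx (block_mx UA 0 0 UA) 0 0 (block_mx UA 0 0 UA)).
set D := row_mx dB (row_mx (row_mx (- dA) (- dA)) (row_mx (- dA) (- dA))).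
have uU : U \is unitarymx by rewrite /U !blk_unitary.
have eM : block_mx Bz 0 0 (- block_mx (block_mx Az 0 0 Az) 0 0 (block_mx Az 0 0 Az))
   = U ^t* *m diag_mx D *m U.
  by rewrite eB eA !opp_block_mx !oppr0 !neg_dec !blk_dec.
rewrite eM in HL.
have h1 := iso_bound uU HL Lf.
have HL' : Lz *m (U ^t* *m diag_mx (- D) *m U) *m Lz ^t* = 0.
  by rewrite -neg_dec mulmxN mulNmx HL oppr0.
have h2 := iso_bound uU HL' Lf.
rewrite /D !opp_row !opprK !poscnt_row in h1 h2.
rewrite /signature cp cn.
move: h1 h2 pq; set p := poscnt dA; set q := poscnt (- dA) => h1 h2 pq.
have H1 : (4 * p <= n + 4 * q)%nat by lia.
have H2 : (4 * q <= n + 4 * p)%nat by lia.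
have R1 : (4 * p)%:R <= (n + 4 * q)%:R :> Rdefinitions.R by rewrite ler_nat.
have R2 : (4 * q)%:R <= (n + 4 * p)%:R :> Rdefinitions.R by rewrite ler_nat.
rewrite natrD !natrM in R1 R2.
rewrite intrB -[(Posz p)%:~R]/(p%:R) -[(Posz q)%:~R]/(q%:R).
have [h|h] := leP 0 (p%:R - q%:R : Rdefinitions.R).
  by rewrite ger0_norm //; lra.
by rewrite ltr0_norm //; lra.
Qed.


Lemma fden_neq0 (f : Qt) : fden f != 0.
Proof. exact: denom_ratioP. Qed.

Lemma pinumden (x : {ratio {poly rat}}) :
  ((\pi_Qt x)%qT : Qt) * tofrac x.2 = tofrac x.1.
Proof.
rewrite !piE.
apply/eqmodP; rewrite /= FracField.equivfE /FracField.mulf.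
rewrite !numden_Ratio; rewrite ?mulr1.
all: try exact: oner_neq0.
all: try by rewrite mulrC.
all: by rewrite ?mulr1; apply: denom_ratioP.
Qed.

Lemma fnumden (f : Qt) : f * tofrac (fden f) = tofrac (fnum f).
Proof. by rewrite /fnum /fden -{1}[f]reprK pinumden. Qed.

Definition tc : {rmorphism rat -> Qt} := (@tofrac _ \o polyC)%FUN.
Lemma polyinvtE p : polyinvt p = (map_poly tc p).[tQ^-1].
Proof. by []. Qed.

Definition pc (p : {poly rat}) : {poly C} := map_poly ratr p.

Definition evrel (z : C) (f : Qt) (c : C) :=
  exists p q : {poly rat}, [/\ (pc q).[z] != 0, f * tofrac q = tofrac p &
     c = (pc p).[z] / (pc q).[z]].

Lemma tofrac_inj : injective (@tofrac {poly rat}).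
Proof. by move=> p q /eqP; rewrite tofrac_eq => /eqP. Qed.

Lemma pcM p q : pc (p * q) = pc p * pc q.
Proof. exact: rmorphM. Qed.
Lemma pcD p q : pc (p + q) = pc p + pc q.
Proof. exact: rmorphD. Qed.

Lemma ev_uniq z f c c' : evrel z f c -> evrel z f c' -> c = c'.
Proof.
move=> [p [q [q0 fq ->]]] [p' [q' [q0' fq' ->]]].
have e : p * q' = p' * q.
  apply: tofrac_inj; rewrite !tofracM -fq -fq'.
  by rewrite mulrAC.
have := congr1 (fun r => (pc r).[z]) e; rewrite /= !pcM !hornerM => e'.
apply/eqP; rewrite eqr_div // e' //.
Qed.

Lemma ev_evalQ z f : (pc (fden f)).[z] != 0 -> evrel z f (evalQ f z).
Proof. by move=> h; exists (fnum f), (fden f); split => //; exact: fnumden. Qed.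

Lemma ev_add z f g c d : evrel z f c -> evrel z g d -> evrel z (f + g) (c + d).
Proof.
move=> [p [q [q0 fq ->]]] [p' [q' [q0' fq' ->]]].
exists (p * q' + p' * q), (q * q'); split.
- by rewrite pcM hornerM mulf_neq0.
- by rewrite tofracM tofracD !tofracM -fq -fq'; ring.
- rewrite pcD !pcM hornerD !hornerM; field.
  by apply/andP; split.
Qed.

Lemma ev_mul z f g c d : evrel z f c -> evrel z g d -> evrel z (f * g) (c * d).
Proof.
move=> [p [q [q0 fq ->]]] [p' [q' [q0' fq' ->]]].
exists (p * p'), (q * q'); split.
- by rewrite pcM hornerM mulf_neq0.
- by rewrite !tofracM -fq -fq'; ring.
- rewrite !pcM !hornerM; field.
  by apply/andP; split.
Qed.

Lemma ev_const z a : evrel z (tofrac a%:P) (ratr a).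
Proof.
exists a%:P, 1; split.
- by rewrite /pc rmorph1 hornerC oner_neq0.
- by rewrite rmorph1 mulr1.
- by rewrite /pc rmorph1 hornerC divr1 map_polyC hornerC.
Qed.

Lemma ev0 z : evrel z 0 0.
Proof. by have := ev_const z 0; rewrite tofrac0 rmorph0 // => h; rewrite -[X in evrel _ X _]tofrac0 -(rmorph0 (ratr : {rmorphism rat -> C})). Qed.

Lemma ev1 z : evrel z 1 1.
Proof. by have := ev_const z 1; rewrite !rmorph1. Qed.

Lemma ev_opp z f c : evrel z f c -> evrel z (- f) (- c).
Proof.
move=> h; have := ev_mul (ev_const z (-1)) h.
by rewrite !rmorphN1 !mulN1r.
Qed.

Lemma ev_tQ z : evrel z tQ z.
Proof.
exists 'X, 1; split.
- by rewrite /pc rmorph1 hornerC oner_neq0.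
- by rewrite rmorph1 mulr1.
- by rewrite /pc rmorph1 hornerC divr1 map_polyX hornerX.
Qed.

Lemma ev_inv z f c : evrel z f c -> c != 0 -> evrel z f^-1 c^-1.
Proof.
move=> [p [q [q0 fq ->]]] c0.
have p0 : (pc p).[z] != 0 by move: c0; rewrite mulf_eq0 negb_or => /andP[].
have pn0 : p != 0 by apply: contraNneq p0 => ->; rewrite /pc rmorph0 horner0.
have f0 : f != 0.
  by apply/eqP => f0; move: pn0; rewrite -tofrac_eq0 -fq f0 mul0r eqxx.
exists q, p; split => //.
- by rewrite -fq mulrA mulVf // mul1r.
- by rewrite invf_div.
Qed.

Lemma ev_sum z (I : finType) (F : I -> Qt) (G : I -> C) :
  (forall i, evrel z (F i) (G i)) -> evrel z (\sum_i F i) (\sum_i G i).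
Proof.
move=> h; apply: (big_ind2 (evrel z)) => //; first exact: ev0.
by move=> ? ? ? ?; apply: ev_add.
Qed.

Lemma ev_horner z g w p : evrel z g w ->
  evrel z ((map_poly tc p).[g]) ((pc p).[w]).
Proof.
move=> hg; elim/poly_ind: p => [|p c IH].
  by rewrite /pc !rmorph0 !horner0; exact: ev0.
rewrite /pc !rmorphD !rmorphM /= !map_polyX !map_polyC !hornerMXaddC.
apply: ev_add; first exact: ev_mul.
exact: ev_const.
Qed.

Lemma conj_pc p : map_poly Num.conj (pc p) = pc p.
Proof.
rewrite /pc -map_poly_comp; apply: eq_map_poly => a /=.
exact: (fmorph_rat (Num.conj : {rmorphism C -> C})).
Qed.

Lemma ev_polyinvt z p : z != 0 -> Num.conj z = z^-1 ->
  evrel z (polyinvt p) (Num.conj ((pc p).[z])).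
Proof.
move=> z0 cz; rewrite polyinvtE.
have := ev_horner p (ev_inv (ev_tQ z) z0).
by rewrite -cz -(horner_map (Num.conj : {rmorphism C -> C})) conj_pc.
Qed.

Lemma ev_qtbar z f : z != 0 -> Num.conj z = z^-1 -> (pc (fden f)).[z] != 0 ->
  evrel z (qt_bar f) (Num.conj (evalQ f z)).
Proof.
move=> z0 cz d0; rewrite /qt_bar /evalQ.
rewrite (rmorphM (Num.conj : {rmorphism C -> C})) fmorphV.
apply: ev_mul; first exact: ev_polyinvt.
apply: ev_inv; first exact: ev_polyinvt.
by rewrite conjC_eq0.
Qed.


Definition mxrel (z : C) m n (X : 'M[Qt]_(m, n)) (Xc : 'M[C]_(m, n)) :=
  forall i j, evrel z (X i j) (Xc i j).

Definition good (z : C) m n (X : 'M[Qt]_(m, n)) :=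
  forall i j, (pc (fden (X i j))).[z] != 0.

Lemma mxrel_uniq z m n (X : 'M[Qt]_(m, n)) Xc Xc' : mxrel z X Xc -> mxrel z X Xc' -> Xc = Xc'.
Proof. by move=> h h'; apply/matrixP => i j; apply: ev_uniq (h i j) (h' i j). Qed.

Lemma mxrel_mul z m n p (X : 'M[Qt]_(m, n)) (Y : 'M[Qt]_(n, p)) Xc Yc :
  mxrel z X Xc -> mxrel z Y Yc -> mxrel z (X *m Y) (Xc *m Yc).
Proof.
move=> hX hY i j; rewrite !mxE; apply: ev_sum => l; exact: ev_mul.
Qed.

Lemma mxrel0 z m n : mxrel z (0 : 'M[Qt]_(m, n)) 0.
Proof. by move=> i j; rewrite !mxE; exact: ev0. Qed.

Lemma mxrel1 z n : mxrel z (1%:M : 'M[Qt]_n) 1%:M.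
Proof. by move=> i j; rewrite !mxE; case: (i == j); [exact: ev1 | exact: ev0]. Qed.

Lemma mxrel_opp z m n (X : 'M[Qt]_(m, n)) Xc : mxrel z X Xc -> mxrel z (- X) (- Xc).
Proof. by move=> h i j; rewrite !mxE; exact: ev_opp. Qed.

Lemma mxrel_block z m1 m2 n1 n2 (A : 'M[Qt]_(m1, n1)) (B : 'M[Qt]_(m1, n2))
  (Cm : 'M[Qt]_(m2, n1)) (D : 'M[Qt]_(m2, n2)) Ac Bc Cc Dc :
  mxrel z A Ac -> mxrel z B Bc -> mxrel z Cm Cc -> mxrel z D Dc ->
  mxrel z (block_mx A B Cm D) (block_mx Ac Bc Cc Dc).
Proof.
move=> hA hB hC hD i j.
rewrite -(fintype.splitK i) -(fintype.splitK j).
case: (fintype.split i) => i'; case: (fintype.split j) => j' /=;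
  by rewrite ?block_mxEul ?block_mxEur ?block_mxEdl ?block_mxEdr.
Qed.

Definition evm (z : C) m n (X : 'M[Qt]_(m, n)) : 'M[C]_(m, n) := map_mx (evalQ ^~ z) X.

Lemma mxrel_eval z m n (X : 'M[Qt]_(m, n)) : good z X -> mxrel z X (evm z X).
Proof. by move=> h i j; rewrite mxE; exact: ev_evalQ. Qed.

Lemma mxrel_adj z m n (X : 'M[Qt]_(m, n)) : z != 0 -> Num.conj z = z^-1 ->
  good z X -> mxrel z (adjQ X) ((evm z X) ^t*).
Proof. by move=> z0 cz h i j; rewrite !mxE; exact: ev_qtbar. Qed.

Lemma key_point n m kk (B : 'M[Qt]_n) (A : 'M[Qt]_m)
  (L : 'M[Qt]_(kk, n + (m + m + (m + m)))) (Rv : 'M[Qt]_(n + (m + m + (m + m)), kk))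
  (Ai : 'M[Qt]_m) z :
  z != 0 -> Num.conj z = z^-1 -> Defs.hermitian B -> Defs.hermitian A -> A *m Ai = 1%:M ->
  L *m Rv = 1%:M -> (kk + kk)%nat = (n + (m + m + (m + m)))%nat ->
  L *m dsum B (- four A) *m adjQ L = 0 ->
  good z B -> good z A -> good z Ai -> good z L -> good z Rv ->
  `|(signature (evalmx A z))%:~R : Rdefinitions.R| * 4 <= n%:R.
Proof.
move=> z0 cz hB hA AAi LR hk HL gB gA gAi gL gR.
change (evalmx A z) with (evm z A).
apply: (@la_main n m kk (evm z B) (evm z A) (evm z L)) => //.
- have h := mxrel_adj z0 cz gB; rewrite hB in h; exact: mxrel_uniq (mxrel_eval gB) h.
- have h := mxrel_adj z0 cz gA; rewrite hA in h; exact: mxrel_uniq (mxrel_eval gA) h.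
- have h := mxrel_mul (mxrel_eval gA) (mxrel_eval gAi); rewrite AAi in h.
  have e := mxrel_uniq h (@mxrel1 z m).
  by case: (mulmx1_unit e).
- apply/row_freeP; exists (evm z Rv).
  have h := mxrel_mul (mxrel_eval gL) (mxrel_eval gR); rewrite LR in h.
  by rewrite (mxrel_uniq h (@mxrel1 z kk)).
- have hM : mxrel z (dsum B (- four A))
     (block_mx (evm z B) 0 0 (- block_mx (block_mx (evm z A) 0 0 (evm z A)) 0 0
                                          (block_mx (evm z A) 0 0 (evm z A)))).
    rewrite /dsum /four /dsum.
    apply: mxrel_block; [exact: mxrel_eval | exact: mxrel0 | exact: mxrel0 |].
    apply: mxrel_opp; apply: mxrel_block; try exact: mxrel0;
      apply: mxrel_block; try exact: mxrel0; exact: mxrel_eval.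
  have h := mxrel_mul (mxrel_mul (mxrel_eval gL) hM) (mxrel_adj z0 cz gL).
  rewrite HL in h.
  exact: esym (mxrel_uniq (@mxrel0 z _ _) h).
Qed.

Import numFieldNormedType.Exports.
Local Open Scope classical_set_scope.

Lemma expi_conj (x : RR) : expi x * Num.conj (expi x) = 1.
Proof.
rewrite /expi; simpc; apply/eqP; rewrite eq_complex /=; apply/andP; split; apply/eqP.
  by rewrite -!expr2 cos2Dsin2.
by rewrite mulrC addNr.
Qed.

Lemma expi_neq0 (x : RR) : expi x != 0.
Proof. by apply/eqP => e; have := expi_conj x; rewrite e mul0r => /eqP; rewrite eq_sym oner_eq0. Qed.

Lemma conj_expi (x : RR) : Num.conj (expi x) = (expi x)^-1.
Proof.
apply: (mulfI (expi_neq0 x)); rewrite expi_conj mulfV //; exact: expi_neq0.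
Qed.

Lemma near_ballR (t e : RR) : 0 < e -> \forall x \near t, `|t - x| < e.
Proof. by move=> e0; apply/nbhs_ballP; exists e. Qed.

Lemma expi_inj (t x : RR) : `|t - x| < 1 -> expi x = expi t -> x = t.
Proof.
move=> hx e.
have hc : cos (2 * pi * x) = cos (2 * pi * t) by have := congr1 (@complex.Re RR) e.
have hs : sin (2 * pi * x) = sin (2 * pi * t) by have := congr1 (@complex.Im RR) e.
have h1 : cos (2 * pi * x - 2 * pi * t) = 1 by rewrite cosB hc hs -!expr2 cos2Dsin2.
set u := pi * (x - t).
have hu : 2 * pi * x - 2 * pi * t = u + u by rewrite /u; ring.
rewrite hu trigo.cosD in h1.
have hsu : sin u = 0.
  have := cos2Dsin2 u => h2.
  have : sin u ^+ 2 == 0 by apply/eqP; rewrite expr2; lra.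
  by rewrite sqrf_eq0 => /eqP.
have pi0 := @pi_gt0 RR.
move: hx; rewrite distrC => /ltr_normlP [hl hr].
have hl' : - (x - t) < 1 by [].
case: (ltgtP (x - t) 0) => hxt.
- have : 0 < sin (- u).
    apply: sin_gt0_pi; apply/andP; split; rewrite /u; nra.
  by rewrite sinN hsu oppr0 ltxx.
- have : 0 < sin u.
    apply: sin_gt0_pi; apply/andP; split; rewrite /u; nra.
  by rewrite hsu ltxx.
- by apply/eqP; rewrite -subr_eq0 hxt.
Qed.

Lemma cos_cont (t : RR) : {for t, continuous (fun x : RR => cos (2 * pi * x))}.
Proof.
apply: (continuous_comp (f := fun x : RR => 2 * pi * x) (g := cos)); last exact: continuous_cos.
apply: cvgMr; exact: cvg_id.
Qed.

Lemma sin_cont (t : RR) : {for t, continuous (fun x : RR => sin (2 * pi * x))}.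
Proof.
apply: (continuous_comp (f := fun x : RR => 2 * pi * x) (g := sin)); last exact: continuous_sin.
apply: cvgMr; exact: cvg_id.
Qed.

Lemma near_neq_cont (g : RR -> RR) t a : {for t, continuous g} -> g t != a ->
  \forall x \near t, g x != a.
Proof.
move=> hg ne.
have hn : nbhs (g t) [set y | y != a].
  by apply: open_nbhs_nbhs; split => //; exact: open_neq.
exact: (hg _ hn).
Qed.

Lemma near_expi_neq (t : RR) (r : C) : \forall x \near t, x != t -> expi x != r.
Proof.
case: (eqVneq (expi t) r) => [<-|ne].
  near=> x => xt; apply/eqP => e.
  have hx : `|t - x| < 1 by near: x; exact: (near_ballR t (@ltr01 RR)).
  by move/eqP: xt; apply; apply: expi_inj hx e.
have [hc|hs] : cos (2 * pi * t) != complex.Re r \/ sin (2 * pi * t) != complex.Im r.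
  case: (eqVneq (cos (2 * pi * t)) (complex.Re r)) => hc; last by left.
  case: (eqVneq (sin (2 * pi * t)) (complex.Im r)) => hs; last by right.
  by move: ne; rewrite /expi hc hs; case: r {hc hs} => a b; rewrite eqxx.
- near=> x => _; apply/eqP => e.
  have hx : cos (2 * pi * x) != complex.Re r by near: x; exact: (near_neq_cont (@cos_cont t) hc).
  by move: hx; rewrite -e eqxx.
- near=> x => _; apply/eqP => e.
  have hx : sin (2 * pi * x) != complex.Im r by near: x; exact: (near_neq_cont (@sin_cont t) hs).
  by move: hx; rewrite -e eqxx.
Unshelve. all: by end_near.
Qed.

Lemma near_poly (t : RR) (P : {poly C}) : P != 0 ->
  \forall x \near t, x != t -> P.[expi x] != 0.
Proof.
move=> P0; have [rs Hrs] := closed_field_poly_normal P.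
have H : \forall x \near t, x != t -> all (fun r => expi x != r) rs.
  elim: rs {Hrs} => [|r rs IH].
    by near=> x.
  apply: filterS2 (near_expi_neq t r) IH => x h1 h2 xt /=.
  by rewrite h1 // h2.
apply: filterS H => x h xt.
rewrite Hrs hornerZ mulf_neq0 ?lead_coef_eq0 // horner_prod prodf_seq_neq0.
move: (h xt); apply: sub_all => r /= hr.
by rewrite hornerXsubC subr_eq0.
Unshelve. all: by end_near.
Qed.

Lemma lim_bound (F : set_system RR) (PF : ProperFilter F) (f : RR -> RR) c :
  (\forall x \near F, `|f x| <= c) -> 0 <= c -> `|lim (f @ F)| <= c.
Proof.
move=> hF c0; case: (pselect (cvg (f @ F))) => h.
  have hl : f @ F --> lim (f @ F) := h.
  have hF' : \forall x \near F, (- c <= f x) /\ (f x <= c).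
    by apply: filterS hF => x /ler_normlP [h1 h2]; split => //; rewrite lerNl.
  have := @closed_cvg _ _ F PF f ([set y | - c <= y] `&` [set y | y <= c])
     (closedI (@closed_ge _ (- c)) (@closed_le _ c)) hF' _ hl.
  by move=> [h1 h2]; apply/ler_normlP; split => //; rewrite lerNl.
by rewrite /lim dvg_inP // normr0.
Qed.

Lemma near_right (t : RR) (P : RR -> Prop) :
  (\forall x \near t, x != t -> P x) -> \forall x \near t^'+, P x.
Proof. by move=> H; rewrite near_withinE; apply: filterS H => x h tx; apply: h; rewrite gt_eqF. Qed.

Lemma near_left (t : RR) (P : RR -> Prop) :
  (\forall x \near t, x != t -> P x) -> \forall x \near t^'-, P x.
Proof. by move=> H; rewrite near_withinE; apply: filterS H => x h tx; apply: h; rewrite lt_eqF. Qed.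

Lemma sigma_bound n (A : 'M[Qt]_n) (t c : RR) :
  (\forall x \near t, x != t -> `|sigma' A x| <= c) -> 0 <= c -> `|sigma A t| <= c.
Proof.
move=> H c0.
have h1 := lim_bound (at_right_proper_filter t) (near_right H) c0.
have h2 := lim_bound (at_left_proper_filter t) (near_left H) c0.
rewrite /sigma; case: ifP => _ //.
move: h1 h2 => /ler_normlP [h1 h1'] /ler_normlP [h2 h2'].
apply/ler_normlP; split; lra.
Qed.

Import numFieldNormedType.Exports.
Local Open Scope classical_set_scope.

Definition gpoly m n (X : 'M[Qt]_(m, n)) : {poly C} := \prod_i \prod_j pc (fden (X i j)).

Lemma pc_neq0 p : p != 0 -> pc p != 0.
Proof. by rewrite /pc map_poly_eq0. Qed.

Lemma gpoly_neq0 m n (X : 'M[Qt]_(m, n)) : gpoly X != 0.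
Proof.
rewrite /gpoly prodf_seq_neq0; apply/allP => i _ /=.
rewrite prodf_seq_neq0; apply/allP => j _ /=.
exact/pc_neq0/fden_neq0.
Qed.

Lemma gpoly_good z m n (X : 'M[Qt]_(m, n)) : (gpoly X).[z] != 0 -> good z X.
Proof.
move=> h i j; move: h; rewrite /gpoly horner_prod prodf_seq_neq0.
move=> /allP /(_ i (mem_index_enum _)) /=.
rewrite horner_prod prodf_seq_neq0 => /allP /(_ j (mem_index_enum _)) //.
Qed.

Lemma fnum0 : fnum 0 = 0.
Proof. by have := fnumden 0; rewrite mul0r => /esym/eqP; rewrite tofrac_eq0 => /eqP. Qed.

Lemma fnum1 : fnum 1 = fden 1.
Proof. by have := fnumden 1; rewrite mul1r => /tofrac_inj. Qed.

Lemma qt_bar0 : qt_bar 0 = 0.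
Proof. by rewrite /qt_bar fnum0 polyinvtE rmorph0 horner0 mul0r. Qed.

Lemma exists_good_point (P : {poly C}) : P != 0 -> exists x : RR, P.[expi x] != 0.
Proof.
move=> P0.
have h := near_right (near_poly 0 P0).
have [x hx] := filter_ex h.
by exists x.
Qed.

Lemma polyinvt_neq0 p : p != 0 -> polyinvt p != 0.
Proof.
move=> p0; have [x hx] := exists_good_point (pc_neq0 p0).
apply/eqP => e.
have h := ev_polyinvt p (expi_neq0 x) (conj_expi x).
rewrite e in h.
have := ev_uniq h (ev0 _).
by move=> /eqP; rewrite conjC_eq0 (negbTE hx).
Qed.

Lemma qt_bar1 : qt_bar 1 = 1.
Proof. by rewrite /qt_bar fnum1 divff // polyinvt_neq0 // fden_neq0. Qed.

Lemma map_qt_bar0 m n : map_mx qt_bar (0 : 'M[Qt]_(m, n)) = 0.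
Proof. by apply/matrixP => i j; rewrite !mxE qt_bar0. Qed.

Lemma map_qt_bar1 n : map_mx qt_bar (1%:M : 'M[Qt]_n) = 1%:M.
Proof. by apply/matrixP => i j; rewrite !mxE; case: (i == j); rewrite ?qt_bar1 ?qt_bar0. Qed.

Lemma adjQ_dsum a b (X : 'M[Qt]_a) (Y : 'M[Qt]_b) : adjQ (dsum X Y) = dsum (adjQ X) (adjQ Y).
Proof. by rewrite /adjQ /dsum map_block_mx !map_qt_bar0 tr_block_mx !trmx0. Qed.

Lemma four_nsherm m (A : 'M[Qt]_m) : nsherm A -> nsherm (four A).
Proof.
move=> [hA uA]; split.
  by rewrite /Defs.hermitian /four !adjQ_dsum hA.
by rewrite /four /dsum !block_diag_mx_unit uA.
Qed.

Lemma meta_self N (F : 'M[Qt]_N) : metabolic (dsum F (- F)).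
Proof.
exists N, (row_mx 1%:M 1%:M); split => //; split.
  apply/eqP; apply/row_freeP; exists (col_mx 1%:M 0).
  by rewrite mul_row_col mulmx1 mulmx0 addr0.
rewrite /dsum mul_row_block !mulmx0 !mul1mx addr0 add0r.
rewrite /adjQ map_row_mx map_qt_bar1 tr_row_mx trmx1 mul_row_col !mulmx1.
by rewrite subrr.
Qed.

Lemma key_bound m n (A : 'M[Qt]_m) (B : 'M[Qt]_n) : nsherm A -> nsherm B ->
  witt_equiv B (four A) -> forall t : RR, `|sigma A t| * 4 <= n%:R.
Proof.
move=> [hA uA] [hB _] [kk [L [hk [rL HL]]]] t.
have Lf : row_free L by rewrite /row_free rL.
have [Rv LR] := row_freeP Lf.
have AAi : A *m invmx A = 1%:M by rewrite mulmxV.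
set G := gpoly B * gpoly A * gpoly (invmx A) * gpoly L * gpoly Rv.
have G0 : G != 0 by rewrite !mulf_neq0 // gpoly_neq0.
have c0 : 0 <= n%:R / 4 :> RR by rewrite divr_ge0 // ler0n.
suff : `|sigma A t| <= n%:R / 4 by move=> h; lra.
apply: sigma_bound => //.
apply: filterS (near_poly t G0) => x hx xt.
have := hx xt; rewrite /G !hornerM !mulf_eq0 !negb_or => /andP[/andP[/andP[/andP[gB gA] gAi] gL] gR].
have := key_point (expi_neq0 x) (conj_expi x) hB hA AAi LR hk HL
  (gpoly_good gB) (gpoly_good gA) (gpoly_good gAi) (gpoly_good gL) (gpoly_good gR).
rewrite /sigma' => h; lra.
Qed.

Theorem mainTheorem7 (m k : nat) (A : 'M[Qt]_m) :
  (0 < k)%N -> nsherm A -> s_fun A k <= rho_s A k.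
Proof.
move=> k0 hA.
set S := [set (n%:R : RR) | n in [set n : nat |
        exists B : 'M[Qt]_n, nsherm B /\ witt_equiv B (four A)]].
have S0 : S (m + m + (m + m))%:R.
  exists (m + m + (m + m))%nat => //.
  exists (four A); split; first exact: four_nsherm.
  exact: meta_self.
have HS : S !=set0 by exists (m + m + (m + m))%:R.
have key : forall t, `|sigma A t| * 4 <= rho (four A).
  move=> t; apply: lb_le_inf => //.
  by move=> y [n [B [hB hw]] <-]; apply: key_bound hA hB hw t.
have H : maxsig A <= rho (four A) / 4.
  rewrite /maxsig; apply: ge_sup.
    exists `|sigma A 0|, 0 => //.
    by rewrite /= in_itv /= lexx /=; lra.
  by move=> y [t _ <-]; have := key t; lra.
rewrite /s_fun /rho_s !RdivE RmultE invfM mulrA.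
have kp : 0 < k%:R :> RR by rewrite ltr0n.
apply: ler_wpM2r; first by rewrite invr_ge0 ltW.
rewrite IZRposE INRE /=; exact: H.
Qed.
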